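(* Let $\mathfrak g$ be one of the complex simple Lie algebras $\mathfrak{sl}_3$, $\mathfrak{sp}_2$, or $\mathfrak g_2$, with a choice of positive roots $\Sigma^+$. Then, as a rational function, $$\sum_{\substack{\beta,\gamma\in\Sigma^+\\ \beta\neq\gamma}}\frac{\langle\beta,\gamma\rangle}{\beta\,\gamma}=0.$$
   Context: Roots are regarded as linear functions (on the real Cartan subspace, equivalently on its dual via the inner product), so $\frac{\langle\beta,\gamma\rangle}{\beta\gamma}$ is a rational function whose numerator is the constant $\langle\beta,\gamma\rangle$, the inner product on roots induced by the Killing form. *)

(* Defs.v *)
From mathcomp Require Import all_boot all_order all_algebra.
Set Implicit Arguments. Unset Strict Implicit. Unset Printing Implicit Defensive.
Import Order.TTheory GRing.Theory Num.Theory.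
Local Open Scope ring_scope.

(* The three rank-2 complex simple Lie algebras of the statement:
   sl_3 (type A2), sp_2 = sp(4) (type C2), g_2 (type G2). *)
Inductive rank2_type := TypeA2 | TypeC2 | TypeG2.

(* Gram matrix (g11, g12, g22) of the simple roots a1, a2 for an invariant
   inner product (a positive multiple of the one induced by the Killing form).
   C2, G2: a1 short, a2 long. *)
Definition gram (t : rank2_type) : int * int * int :=
  match t with
  | TypeA2 => ((2%Z : int), (-1)%Z, (2%Z : int))
  | TypeC2 => (1%Z, (-1)%Z, 2%Z)
  | TypeG2 => (2%Z, (-3)%Z, 6%Z)
  end.

(* Standard positive roots, written in coordinates w.r.t. simple roots. *)
Definition std_pos_roots (t : rank2_type) : seq (int * int) :=
  match t with
  | TypeA2 => [:: (1%Z, 0%Z); (0%Z, 1%Z); (1%Z, 1%Z)]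
  | TypeC2 => [:: (1%Z, 0%Z); (0%Z, 1%Z); (1%Z, 1%Z); (2%Z, 1%Z)]
  | TypeG2 => [:: (1%Z, 0%Z); (0%Z, 1%Z); (1%Z, 1%Z); (2%Z, 1%Z);
                  (3%Z, 1%Z); (3%Z, 2%Z)]
  end.

(* A choice of positive roots: one root out of each pair {b, -b}; every
   positive system arises this way for a suitable sign function s. *)
Definition pos_system (t : rank2_type) (s : nat -> bool) : seq (int * int) :=
  mkseq (fun i => let b := nth (0, 0) (std_pos_roots t) i in
                  if s i then (- b.1, - b.2) else b)
        (size (std_pos_roots t)).

Definition rform (t : rank2_type) (u v : int * int) : int :=
  let: (g11, g12, g22) := gram t in
  u.1 * v.1 * g11 + (u.1 * v.2 + u.2 * v.1) * g12 + u.2 * v.2 * g22.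

(* The root b viewed as a linear function on the Cartan subspace (identified
   with its dual via the inner product); x = x.1 a1 + x.2 a2, value <b, x>. *)
Definition root_fun (R : numFieldType) (t : rank2_type) (b : int * int)
    (x : R * R) : R :=
  let: (g11, g12, g22) := gram t in
  (b.1 * g11 + b.2 * g12)%:~R * x.1 + (b.1 * g12 + b.2 * g22)%:~R * x.2.

(* Main.v *)
Require Import Defs.
From mathcomp Require Import all_boot all_order all_algebra.
From mathcomp Require Import ring lra.
Import Order.TTheory GRing.Theory Num.Theory.
Set Implicit Arguments. Unset Strict Implicit.
Local Open Scope ring_scope.

Definition fterm (R : numFieldType) t (x : R * R) (b c : int * int) : R :=
  (rform t b c)%:~R / (root_fun t b x * root_fun t c x).

Definition sflip (sb : bool) (b : int * int) := if sb then (- b.1, - b.2) else b.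

Lemma root_fun_neg (R : numFieldType) t sb b (x : R * R) :
  root_fun t (sflip sb b) x = (-1) ^+ sb * root_fun t b x.
Proof.
case: sb; last by rewrite mul1r.
case: t; case: b => b1 b2; rewrite /root_fun /=; case: x => x1 x2 /=;
  rewrite ?(intrD, intrM, intrN, mulrNz); ring.
Qed.

Lemma rform_neg t sb sc b c :
  rform t (sflip sb b) (sflip sc c) = (-1) ^+ sb * (-1) ^+ sc * rform t b c.
Proof.
case: sb; case: sc; case: t; case: b => b1 b2; case: c => c1 c2; rewrite /rform /=; ring.
Qed.

Lemma fterm_neg (R : numFieldType) t (x : R * R) b c (sb sc : bool) :
  fterm t x (sflip sb b) (sflip sc c) = fterm t x b c.
Proof.
rewrite /fterm rform_neg !root_fun_neg.
case: sb; case: sc; rewrite /= ?expr1 ?expr0 ?(mul1r, mulN1r, mulNr, mulrN, opprK, intrN, invrN) //.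
Qed.

Lemma sum_std (R : numFieldType) t s (x : R * R) :
  \sum_(i < size (pos_system t s)) \sum_(j < size (pos_system t s) | i != j)
     ((rform t (pos_system t s)`_i (pos_system t s)`_j)%:~R
        / (root_fun t (pos_system t s)`_i x * root_fun t (pos_system t s)`_j x))
  = \sum_(i < size (std_pos_roots t)) \sum_(j < size (std_pos_roots t) | i != j)
      fterm t x (std_pos_roots t)`_i (std_pos_roots t)`_j.
Proof.
have E : forall i, (i < size (std_pos_roots t))%N ->
   (pos_system t s)`_i = sflip (s i) (std_pos_roots t)`_i.
  by move=> i Hi; rewrite /pos_system nth_mkseq.
rewrite /pos_system size_mkseq -/(pos_system t s).
apply: eq_bigr => i _; apply: eq_bigr => j _.
by rewrite !E // -(fterm_neg t x _ _ (s i) (s j)).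
Qed.

Lemma std_nz (R : numFieldType) t s (x : R * R) :
  (forall b, b \in pos_system t s -> root_fun t b x != 0) ->
  forall i, (i < size (std_pos_roots t))%N -> root_fun t (std_pos_roots t)`_i x != 0.
Proof.
move=> H i Hi.
have : (i < size (pos_system t s))%N by rewrite size_mkseq.
move=> /(mem_nth (0, 0)) /H.
rewrite /pos_system nth_mkseq // -/(sflip (s i) _) root_fun_neg.
by rewrite mulf_eq0 negb_or => /andP[].
Qed.

Lemma nz_eq (R : numFieldType) (e f : R) : f != 0 -> e = f -> e != 0.
Proof. by move=> + ->. Qed.

Lemma nz_opp (R : numFieldType) (e f : R) : f != 0 -> e = - f -> e != 0.
Proof. by move=> + ->; rewrite oppr_eq0. Qed.

Lemma nz_mul (R : numFieldType) (c e f : R) : f != 0 -> f = c * e -> e != 0.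
Proof. move=> Hf Ef; apply/eqP => E0; move: Hf; by rewrite Ef E0 mulr0 eqxx. Qed.

Ltac nz1 := match goal with
  | H : is_true (_ != 0) |- is_true (_ != 0) =>
      first [ apply: (nz_eq H); ring | apply: (nz_opp H); ring
            | apply: (nz_mul (c := 3) H); ring | apply: (nz_mul (c := -3) H); ring
            | apply: (nz_mul (c := 2) H); ring | apply: (nz_mul (c := -2) H); ring
            | apply: (nz_mul (c := 6) H); ring | apply: (nz_mul (c := -6) H); ring ]
  end.
Ltac nz := repeat (apply/andP; split); nz1.

Theorem mainTheorem16 (R : numFieldType) (t : rank2_type) (s : nat -> bool)
    (x : R * R) :
  (forall b, b \in pos_system t s -> root_fun t b x != 0) ->
  \sum_(i < size (pos_system t s)) \sum_(j < size (pos_system t s) | i != j)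
     ((rform t (pos_system t s)`_i (pos_system t s)`_j)%:~R
        / (root_fun t (pos_system t s)`_i x * root_fun t (pos_system t s)`_j x))
  = 0.
Proof.
move=> H; have N := std_nz H; rewrite sum_std; clear H.
case: t N => N;
rewrite (eq_bigr _ (fun i _ => big_mkcond _ _)) /= !big_ord_recr !big_ord0 /= /fterm.
- have m0 := N 0%N isT; have m1 := N 1%N isT; have m2 := N 2%N isT.
  move: m0 m1 m2; rewrite /root_fun /rform /= => n0 n1 n2.
  field; nz.
- have m0 := N 0%N isT; have m1 := N 1%N isT; have m2 := N 2%N isT; have m3 := N 3%N isT.
  move: m0 m1 m2 m3; rewrite /root_fun /rform /= => n0 n1 n2 n3.
  field; nz.
- have m0 := N 0%N isT; have m1 := N 1%N isT; have m2 := N 2%N isT; have m3 := N 3%N isT.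
  have m4 := N 4%N isT; have m5 := N 5%N isT.
  move: m0 m1 m2 m3 m4 m5; rewrite /root_fun /rform /= => n0 n1 n2 n3 n4 n5.
  field; nz.
Qed.
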